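(* Let $n \ge 1$ and let $G$ be a (nonempty) subgraph of the hypercube $Q_n$ with average degree $d$. Then $G$ contains a geodesic of length at least $d$.
   Context: The hypercube $Q_n$ has vertex set $\{0,1\}^n$, two vertices being adjacent iff they differ in exactly one coordinate; the direction of an edge is that coordinate. A path in $Q_n$ is a geodesic if no two of its edges have the same direction. The length of a path is its number of edges. The average degree of $G$ is $2|E(G)|/|V(G)|$. *)

(* Defs.v *)
From mathcomp Require Import all_boot all_order all_algebra.
Set Implicit Arguments. Unset Strict Implicit. Unset Printing Implicit Defensive.
Import GRing.Theory Num.Theory.

Definition cube (n : nat) := {ffun 'I_n -> bool}.

Definition cube_adj n (u v : cube n) : bool :=
  #|[set i : 'I_n | u i != v i]| == 1%N.

Definition direction n (u v : cube n) : {set 'I_n} := [set i : 'I_n | u i != v i].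

Definition is_subgraph n (V : {set cube n}) (E : {set {set cube n}}) : Prop :=
  forall e, e \in E -> exists u v, [/\ e = [set u; v], cube_adj u v,
                                       u \in V & v \in V].

Definition pnth n (p : seq (cube n)) (i : nat) : cube n :=
  nth [ffun=> false] p i.

Definition is_path n (V : {set cube n}) (E : {set {set cube n}})
    (p : seq (cube n)) : Prop :=
  [/\ p != [::], uniq p, all (fun x => x \in V) p &
      forall i, (i.+1 < size p)%N ->
        [set pnth p i; pnth p i.+1] \in E].

Definition path_length n (p : seq (cube n)) : nat := (size p).-1.

Definition is_geodesic n (p : seq (cube n)) : Prop :=
  forall i j, (i < j)%N -> (j.+1 < size p)%N ->
    direction (pnth p i) (pnth p i.+1)
      != direction (pnth p j) (pnth p j.+1).

Definition average_degree n (V : {set cube n}) (E : {set {set cube n}}) : rat :=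
  (2 * #|E|)%:R / #|V|%:R.

(* Main.v *)
Require Import Defs.
From mathcomp Require Import all_boot all_order all_algebra.
Import GRing.Theory Num.Theory.
Set Implicit Arguments. Unset Strict Implicit. Unset Printing Implicit Defensive.

Definition flip n (i : 'I_n) (v : cube n) : cube n :=
  [ffun j => if j == i then ~~ v j else v j].

Definition low n (k : nat) (e : {set cube n}) : bool :=
  [forall x in e, forall y in e, forall j : 'I_n, (k <= j)%N ==> (x j == y j)].

Definition deg n (E : {set {set cube n}}) k (v : cube n) : nat :=
  \sum_(e in E) ((v \in e) && low k e).

Definition Inv n (V : {set cube n}) (E : {set {set cube n}}) k (v : cube n) q : Prop :=
  [/\ is_path V E (v :: q), is_geodesic (v :: q) &
      forall x, x \in v :: q -> forall j : 'I_n, (k <= j)%N -> x j = v j].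

Lemma flipK n (i : 'I_n) : involutive (flip i).
Proof. by move=> v; apply/ffunP => j; rewrite !ffunE; case: eqP => // _; rewrite ?negbK. Qed.

Lemma direction_flip n (i : 'I_n) v : direction v (flip i v) = [set i].
Proof.
apply/setP => j; rewrite /direction !inE ffunE; case: (j =P i) => [->|/eqP ne].
  by case: (v i).
by rewrite eqxx.
Qed.

Lemma low2 n k (a b : cube n) :
  low k [set a; b] = [forall j : 'I_n, (k <= j)%N ==> (a j == b j)].
Proof.
apply/idP/idP.
- by move/forall_inP => /(_ a (set21 _ _)) /forall_inP /(_ b (set22 _ _)).
- move=> /forallP H; apply/forall_inP => x /set2P [] ->;
  apply/forall_inP => y /set2P [] ->; apply/forallP => j; apply/implyP => kj;
  rewrite ?eqxx //; have := implyP (H j) kj; by rewrite // eq_sym.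
Qed.

Lemma edge_flip n V E (HE : is_subgraph V E) k (kn : (k < n)%N) v e :
  e \in E -> v \in e -> low k.+1 e -> ~~ low k e ->
  e = [set v; flip (Ordinal kn) v].
Proof.
move=> eE ve hl1 hl0.
have [a [b [ee hab aV bV]]] := HE e eE.
subst e; rewrite low2 in hl1; rewrite low2 in hl0.
set i := Ordinal kn.
have abi : a i != b i.
  move: hl0; rewrite negb_forall => /existsP [j]; rewrite negb_imply => /andP [kj ne].
  move/forallP: hl1 => /(_ j); case: (ltnP k j) => [kj1 | jk].
    by rewrite (negbTE ne).
  have -> : i = j by apply: val_inj => /=; apply/eqP; rewrite eqn_leq kj jk.
  by [].
have Si : [set j : 'I_n | a j != b j] = [set i].
  move: hab; rewrite /cube_adj => /cards1P [x hx].
  have : i \in [set j : 'I_n | a j != b j] by rewrite inE.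
  by rewrite hx inE => /eqP <-.
have bf : b = flip i a.
  apply/ffunP => j; rewrite ffunE; case: eqP => [->|ne].
    by move: abi; case: (a i); case: (b i).
  apply/eqP; rewrite eq_sym; apply: contraT => h.
  have : j \in [set j : 'I_n | a j != b j] by rewrite inE.
  by rewrite Si inE => /eqP.
move: ve => /set2P [] ->; first by rewrite bf.
by rewrite bf flipK setUC.
Qed.

Lemma low0 n (V : {set cube n}) (E : {set {set cube n}}) (HE : is_subgraph V E) (e : {set cube n}) : e \in E -> ~~ low 0 e.
Proof.
move=> eE; have [a [b [-> hab _ _]]] := HE e eE.
rewrite low2; move: hab; rewrite /cube_adj => /cards1P [x hx].
have : x \in [set j : 'I_n | a j != b j] by rewrite hx set11.
rewrite inE => ne; rewrite negb_forall; apply/existsP; exists x.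
by rewrite /= ne.
Qed.

Lemma lown n (e : {set cube n}) : low n e.
Proof.
apply/forall_inP => x _; apply/forall_inP => y _; apply/forallP => j.
by rewrite leqNgt ltn_ord.
Qed.

Lemma inv_weak n (V : {set cube n}) (E : {set {set cube n}}) k (v : cube n) q : Inv V E k v q -> Inv V E k.+1 v q.
Proof. by case=> P G C; split => // x hx j hj; apply: C => //; apply: ltnW. Qed.

Lemma inv_base n (V : {set cube n}) (E : {set {set cube n}}) (v : cube n) : v \in V -> Inv V E 0 v [::].
Proof.
move=> vV; split.
- split; [done|done|by rewrite /= vV|by move=> [|m]].
- by move=> a [|b].
- by move=> x; rewrite inE => /eqP ->.
Qed.

Lemma inv_ext n (V : {set cube n}) (E : {set {set cube n}}) k (kn : (k < n)%N) (v : cube n) q :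
  [set v; flip (Ordinal kn) v] \in E -> v \in V ->
  Inv V E k (flip (Ordinal kn) v) q ->
  Inv V E k.+1 v (flip (Ordinal kn) v :: q).
Proof.
set i := Ordinal kn => vE vV [[_ uq allV edges] geo coord].
have key : forall x, x \in flip i v :: q -> x i = ~~ v i.
  by move=> x hx; rewrite (coord x hx i (leqnn k)) ffunE eqxx.
split.
- split.
  + by [].
  + rewrite cons_uniq uq andbT; apply/negP => /key.
    by case: (v i).
  + by rewrite /= vV.
  + move=> [|m] hm; first by [].
    by apply: edges.
- move=> [|a] [|b] hab hb.
  + by rewrite ltnn in hab.
  + rewrite /pnth /= direction_flip; apply/eqP => h.
    have : i \in direction (nth [ffun=> false] (flip i v :: q) b)
                           (nth [ffun=> false] (flip i v :: q) b.+1)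
      by rewrite -h set11.
    have hb1 : b.+1 < size (flip i v :: q) by [].
    rewrite /direction inE (key _ (mem_nth _ hb1)) (key _ (mem_nth _ (ltnW hb1))).
    by rewrite eqxx.
  + by rewrite ltn0 in hab.
  + by apply: geo.
- move=> x; rewrite inE => /predU1P [-> //| hx] j hj.
  rewrite (coord x hx j (ltnW hj)) ffunE.
  have -> : (j == i) = false.
    apply/negbTE/eqP => e; move: hj; by rewrite e /= ltnn.
  by [].
Qed.

Lemma step n (V : {set cube n}) (E : {set {set cube n}}) (HE : is_subgraph V E)
  k (kn : (k < n)%N) (f : cube n -> nat) :
  (forall v, v \in V -> exists q, Inv V E k v q /\ size q = f v) ->
  (\sum_(v in V) deg E k v <= \sum_(v in V) f v)%N ->
  exists f' : cube n -> nat,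
    (forall v, v \in V -> exists q, Inv V E k.+1 v q /\ size q = f' v) /\
    (\sum_(v in V) deg E k.+1 v <= \sum_(v in V) f' v)%N.
Proof.
move=> Hf Hs; set i := Ordinal kn.
pose W v := [set v; flip i v] \in E.
have WV v : W v -> v \in V /\ flip i v \in V.
  rewrite /W => vE; have [a [b [eab _ aV bV]]] := HE _ vE.
  have : v \in [set a; b] by rewrite -eab set21.
  have : flip i v \in [set a; b] by rewrite -eab set22.
  by move=> /set2P [] -> /set2P [] ->.
have Wf v : W (flip i v) = W v by rewrite /W flipK setUC.
exists (fun v => if W v then (f (flip i v)).+1 else f v); split.
- move=> v vV; case: ifP => hW.
  + have [_ fV] := WV v hW; have [q [Iq sq]] := Hf _ fV.
    exists (flip i v :: q); split; last by rewrite /= sq.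
    exact: inv_ext.
  + have [q [Iq sq]] := Hf _ vV; exists q; split => //; exact: inv_weak.
- have Hd : forall v, (deg E k.+1 v <= deg E k v + W v)%N.
    move=> v; rewrite /deg.
    have -> : (W v : nat) = \sum_(e in E) (e == [set v; flip i v] : nat).
      rewrite /W; case: (boolP ([set v; flip i v] \in E)) => h.
      + rewrite (bigD1 _ h) /= eqxx big1 // => e /andP [_ ne].
        by rewrite (negbTE ne).
      + rewrite big1 // => e eE; case: eqP => // ee.
        by rewrite -ee eE in h.
    rewrite -big_split /=; apply: leq_sum => e eE.
    case: (boolP ((v \in e) && low k.+1 e)) => [/andP [ve hl1] | _]; last by [].
    case: (boolP (low k e)) => hl0; first by rewrite ve.
    by rewrite (edge_flip HE kn eE ve hl1 hl0) eqxx addn1.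
  apply: leq_trans; first by apply: leq_sum => v _; exact: Hd.
  rewrite big_split /=.
  have r : \sum_(v in V | W v) f (flip i v) = \sum_(v in V | W v) f v.
    rewrite [LHS](reindex_inj (inv_inj (flipK i))) /=.
    apply: eq_big => [v|v _]; last by rewrite flipK.
    rewrite Wf; case: (boolP (W v)) => h; last by rewrite !andbF.
    by have [-> ->] := WV v h.
  have Hsum : \sum_(v in V) (if W v then (f (flip i v)).+1 else f v) =
              (\sum_(v in V) f v + \sum_(v in V) W v)%N.
    rewrite (bigID W) /= [X in _ = (X + _)%N](bigID W) /=
            [X in _ = (_ + X)%N](bigID W) /=.
    have e1 : \sum_(v in V | W v) (if W v then (f (flip i v)).+1 else f v) =
              (\sum_(v in V | W v) f v + \sum_(v in V | W v) W v)%N.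
      rewrite -r -big_split /=; apply: eq_bigr => v /andP [_ ->].
      by rewrite addn1.
    have e2 : \sum_(v in V | ~~ W v) (if W v then (f (flip i v)).+1 else f v) =
              \sum_(v in V | ~~ W v) f v.
      by apply: eq_bigr => v /andP [_ /negbTE ->].
    have e3 : \sum_(v in V | ~~ W v) (W v : nat) = 0%N.
      by apply: big1 => v /andP [_ /negbTE ->].
    by rewrite e1 e2 e3 addn0 addnAC.
  by rewrite Hsum leq_add2r.
Qed.
Lemma induct n (V : {set cube n}) (E : {set {set cube n}}) (HE : is_subgraph V E) :
  forall k, (k <= n)%N -> exists f : cube n -> nat,
    (forall v, v \in V -> exists q, Inv V E k v q /\ size q = f v) /\
    (\sum_(v in V) deg E k v <= \sum_(v in V) f v)%N.
Proof.
elim => [_ | k IH kn].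
- exists (fun _ => 0%N); split.
  + move=> v vV; exists [::]; split => //; exact: inv_base.
  + rewrite big1 // => v _; rewrite /deg big1 // => e eE.
    by rewrite (negbTE (low0 HE eE)) andbF.
- have [f [H1 H2]] := IH (ltnW kn).
  exact: (step HE kn H1 H2).
Qed.

Theorem theorem2 (n : nat) (V : {set cube n}) (E : {set {set cube n}}) :
  (1 <= n)%N -> V != set0 -> is_subgraph V E ->
  exists p : seq (cube n),
    [/\ is_path V E p, is_geodesic p &
        average_degree V E <= (path_length p)%:R :> rat]%R.
Proof.
move=> _ V0 HE.
have [f [H1 H2]] := induct HE (leqnn n).
have [v0 v0V] := set0Pn V V0.
case: (@arg_maxnP _ v0 [in V] f v0V) => vm vmV vmax.
have [q [[Pq Gq _] sq]] := H1 vm vmV.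
exists (vm :: q); split => //.
have hE : (2 * #|E| <= \sum_(v in V) deg E n v)%N.
  rewrite /deg exchange_big /= mulnC -sum_nat_const; apply: leq_sum => e eE.
  have [a [b [ee hab aV bV]]] := HE e eE.
  have ab : b != a.
    apply/eqP => ab; move: hab; rewrite /cube_adj ab.
    have -> : [set i : 'I_n | a i != a i] = set0.
      by apply/setP => i; rewrite !inE eqxx.
    by rewrite cards0.
  rewrite (bigD1 a) // (bigD1 b) /=; last by rewrite bV ab.
  by rewrite ee set21 set22 !lown.
have hm : (\sum_(v in V) f v <= #|V| * f vm)%N.
  by rewrite -sum_nat_const; apply: leq_sum => v; exact: vmax.
rewrite /average_degree /path_length /= sq.
rewrite ler_pdivrMr ?ltr0n ?card_gt0 // -natrM ler_nat mulnC.
rewrite mulnC [X in (_ <= X)%N]mulnC.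
exact: (leq_trans hE (leq_trans H2 hm)).
Qed.
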